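(* Let $G$ be a finite group such that $|Z(G)|$ has at least two distinct prime divisors. Then the difference graph $\mathcal{D}(G)$ is connected if and only if $G$ is not isomorphic to $\mathbb{Z}_{pq}$ for primes $p,q$. Moreover, when $\mathcal{D}(G)$ is connected, its diameter is at most $6$.
   Context: For a finite group $G$ with identity $e$: the intersection power graph $\mathcal{G}_I(G)$ has vertex set $G$, two distinct non-identity vertices $x,y$ being adjacent iff $\langle x\rangle\cap\langle y\rangle\neq\{e\}$, and $e$ being adjacent to every other vertex. The power graph $\mathcal{P}(G)$ has vertex set $G$, two distinct vertices being adjacent iff one is a power of the other. The difference graph $\mathcal{D}(G)$ is the graph on vertex set $G$ with edge set $E(\mathcal{G}_I(G))\setminus E(\mathcal{P}(G))$, with all isolated vertices removed. $Z(G)$ denotes the center of $G$. *)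

(* Defs.v *)
From mathcomp Require Import all_boot all_order all_fingroup all_solvable all_algebra.
Set Implicit Arguments. Unset Strict Implicit. Unset Printing Implicit Defensive.
Local Open Scope group_scope.

Section Graphs.
Variable gT : finGroupType.
Variable G : {group gT}.

Definition ipg_adj (x y : gT) : bool :=
  [&& x \in G, y \in G, x != y &
      [|| x == 1, y == 1 | <[x]> :&: <[y]> != 1]].

Definition pg_adj (x y : gT) : bool :=
  [&& x \in G, y \in G, x != y & (x \in <[y]>) || (y \in <[x]>)].

Definition D_adj (x y : gT) : bool := ipg_adj x y && ~~ pg_adj x y.

Definition D_vert : {set gT} := [set x in G | [exists y, D_adj x y]].

Definition D_connected : bool :=
  (D_vert != set0) &&
  [forall x in D_vert, forall y in D_vert, connect D_adj x y].

Definition D_diam_le (n : nat) : Prop :=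
  forall x y, x \in D_vert -> y \in D_vert ->
    exists s : seq gT, [/\ size s <= n, path D_adj x s & last x s = y].
End Graphs.

(* Main.v *)
Require Import Defs.
From mathcomp Require Import all_boot all_order all_fingroup all_solvable all_algebra.
Set Implicit Arguments. Unset Strict Implicit. Unset Printing Implicit Defensive.
Local Open Scope group_scope.

Lemma arith2 p q n : prime p -> prime q -> n %| p * q -> n != 1%N -> ~~ prime n -> n = (p * q)%N.
Proof.
move=> pp pq dn n1 npn.
have n0 : (0 < n)%N.
  by case: n dn {n1 npn} => //; rewrite dvd0n muln_eq0 => /orP[] /eqP Z; [move: pp | move: pq]; rewrite Z.
have n1' : (1 < n)%N by case: n n0 n1 {dn npn} => [|[|]].
have pr := pdiv_prime n1'.
have rd : pdiv n %| p * q by apply: dvdn_trans (pdiv_dvd n) dn.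
have key : forall p' q', prime p' -> prime q' -> n %| p' * q' -> pdiv n = p' -> n = (p' * q')%N.
  move=> p' q' pp' pq' dn' E.
  have pn : p' %| n by rewrite -E pdiv_dvd.
  have E2 := divnK pn; set k := n %/ p' in E2.
  have : k %| q'.
    by rewrite -(@dvdn_pmul2l p') ?prime_gt0 // mulnC E2.
  case/primeP: pq' => _ /(_ k) H /H /orP[] /eqP Ek.
    by move: npn; rewrite -E2 Ek mul1n pp'.
  by rewrite -E2 Ek mulnC.
move: rd; rewrite Euclid_dvdM // => /orP[] rd.
  by apply: key => //; apply/eqP; rewrite -dvdn_prime2.
rewrite mulnC; apply: key => //; first by rewrite mulnC.
by apply/eqP; rewrite -dvdn_prime2.
Qed.

Section Gen.
Variable gT : finGroupType.
Implicit Types x y z g h a b : gT.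

Lemma cyc_eq x y : x \in <[y]> -> (#[y] <= #[x])%N -> <[x]> = <[y]>.
Proof. by move=> xy le; apply/eqP; rewrite eqEcard cycle_subG xy -!orderE. Qed.

Lemma mem_trans x y z : x \in <[y]> -> y \in <[z]> -> x \in <[z]>.
Proof. by move=> xy; rewrite -cycle_subG => /subsetP; apply. Qed.

Lemma prime_swap y z : y \in <[z]> -> y != 1 -> prime #[z] -> z \in <[y]>.
Proof.
move=> yz y1 pz.
have d : #[y] %| #[z] by rewrite orderE; exact: order_dvdG.
case/primeP: pz => _ /(_ _ d) /orP[]; first by rewrite order_eq1 (negbTE y1).
by move/eqP=> E; rewrite (cyc_eq yz) ?E ?cycle_id.
Qed.

Lemma lemL g a p y : commute g a -> a ^+ p = 1 -> coprime p #[y] ->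
  y \in <[g * a]> -> y \in <[g]>.
Proof.
move=> cga ap cp /cycleP[k E].
have yp : y ^+ p \in <[g]>.
  by rewrite E -expgM mulnC expgM expgMn // ap mulg1 -expgM mem_cycle.
have : generator <[y]> (y ^+ p) by rewrite generator_coprime coprime_sym.
rewrite /generator => /eqP Ey.
have : <[y ^+ p]> \subset <[g]> by rewrite cycle_subG.
by rewrite -Ey cycle_subG.
Qed.

Variable G : {group gT}.

Lemma D_adjI x y z : x \in G -> y \in G -> z \in <[x]> -> z \in <[y]> -> z != 1 ->
  x \notin <[y]> -> y \notin <[x]> -> D_adj G x y.
Proof.
move=> xG yG zx zy z1 nxy nyx.
rewrite /D_adj /ipg_adj /pg_adj xG yG (negbTE nxy) (negbTE nyx) /= andbF andbT.
have -> : x != y by apply: contraNneq nxy => ->; rewrite cycle_id.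
rewrite /=; apply/orP; right; apply/orP; right.
by apply/trivgPn; exists z => //; rewrite inE zx zy.
Qed.

Lemma D_adjE x y : D_adj G x y ->
  [/\ x \in G, y \in G, x \notin <[y]>, y \notin <[x]> &
      exists2 z, z \in <[x]> :&: <[y]> & z != 1].
Proof.
rewrite /D_adj /ipg_adj /pg_adj => /andP[/and4P[xG yG nxy H]].
rewrite xG yG nxy /= negb_or => /andP[nx ny].
have x1 : x != 1 by apply: contraNneq nx => ->; rewrite group1.
have y1 : y != 1 by apply: contraNneq ny => ->; rewrite group1.
move: H; rewrite (negbTE x1) (negbTE y1) /= => /trivgPn[z zI z1].
by split => //; exists z.
Qed.

Lemma D_adjC x y : D_adj G x y -> D_adj G y x.
Proof.
case/D_adjE => xG yG nx ny [z]; rewrite inE => /andP[zx zy] z1.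
exact: (D_adjI yG xG zy zx).
Qed.

Lemma D_adj_ord x y : D_adj G x y -> #[x] != 1%N /\ ~~ prime #[x].
Proof.
case/D_adjE => xG yG nx ny [z]; rewrite inE => /andP[zx zy] z1.
split; first by rewrite order_eq1; apply: contraNneq nx => ->; rewrite group1.
apply/negP => px; have := prime_swap zx z1 px => xz.
by move: nx; rewrite (mem_trans xz zy).
Qed.

End Gen.

Section Hub.
Variable gT : finGroupType.
Variable G : {group gT}.
Variables (p q : nat) (a b : gT).
Hypotheses (pp : prime p) (pq : prime q) (npq : p != q) (aG : a \in G) (bG : b \in G)
  (oa : #[a] = p) (ob : #[b] = q)
  (cA : forall g, g \in G -> commute g a) (cB : forall g, g \in G -> commute g b).

Let cab : commute a b := commute_sym (cA bG).
Let copq : coprime p q.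
Proof. by rewrite prime_coprime // dvdn_prime2. Qed.
Let abC : a \in <[a * b]>.
Proof. by rewrite -cycle_subG cycleMsub // oa ob. Qed.
Let baC : b \in <[a * b]>.
Proof. by rewrite cab -cycle_subG cycleMsub // ?oa ?ob // coprime_sym. Qed.
Let oab : #[a * b] = (p * q)%N.
Proof. by rewrite orderM // oa ob. Qed.
Let a1 : a != 1.
Proof. by rewrite -order_eq1 oa; apply: contraTneq pp => ->. Qed.
Let b1 : b != 1.
Proof. by rewrite -order_eq1 ob; apply: contraTneq pq => ->. Qed.
Let apow : a ^+ p = 1.
Proof. by rewrite -oa expg_order. Qed.
Let abG : a * b \in G.
Proof. by rewrite groupM. Qed.

Lemma hubA u : u \in G -> a \in <[u]> -> b \notin <[u]> -> u \notin <[a * b]> ->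
  D_adj G u (a * b).
Proof.
move=> uG au bu uc; apply: (D_adjI uG abG au abC a1 uc).
by apply: contra bu => cu; apply: mem_trans baC cu.
Qed.

Lemma hubB u : u \in G -> b \in <[u]> -> a \notin <[u]> -> u \notin <[a * b]> ->
  D_adj G u (a * b).
Proof.
move=> uG bu au uc; apply: (D_adjI uG abG bu baC b1 uc).
by apply: contra au => cu; apply: mem_trans abC cu.
Qed.

Lemma caseA x y : D_adj G x y -> a \in <[x]> -> b \notin <[x]> -> D_adj G x (a * b).
Proof.
move=> xy ax bx; have [n1 np] := D_adj_ord xy.
have [xG _ _ _ _] := D_adjE xy.
apply: hubA => //; apply/negP => xc.
have d : #[x] %| #[a * b] by rewrite [#[a * b]]orderE order_dvdG.
rewrite oab in d; have E := arith2 pp pq d n1 np.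
by move: bx; rewrite (cyc_eq xc) ?baC // E oab.
Qed.

Lemma caseC x y g : D_adj G x y -> a \notin <[x]> -> b \notin <[x]> -> g \in <[x]> ->
  prime #[g] -> #[g] != p -> D_adj G x (g * a) /\ D_adj G (g * a) (a * b).
Proof.
move=> xy ax bx gx pg ngp.
have [n1 np] := D_adj_ord xy.
have [xG _ _ _ _] := D_adjE xy.
have gG : g \in G by apply: (subsetP _ _ gx); rewrite cycle_subG.
have cga := cA gG.
have cop : coprime #[g] #[a] by rewrite oa prime_coprime // dvdn_prime2.
have ow : #[g * a] = (#[g] * p)%N by rewrite orderM // oa.
have gw : g \in <[g * a]> by rewrite -cycle_subG cycleMsub.
have aw : a \in <[g * a]> by rewrite cga -cycle_subG cycleMsub // coprime_sym.
have wG : g * a \in G by rewrite groupM.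
have g1 : g != 1 by rewrite -order_eq1; apply: contraTneq pg => ->.
have bw : b \notin <[g * a]>.
  apply: contra bx => bw; apply: mem_trans (gx).
  by apply: (lemL cga apow) => //; rewrite ob.
split.
  apply: (D_adjI xG wG gx gw g1).
    apply/negP => xw.
    have d : #[x] %| #[g * a] by rewrite [#[g * a]]orderE order_dvdG.
    rewrite ow in d; have E := arith2 pg pp d n1 np.
    by move: ax; rewrite (cyc_eq xw) ?aw // E ow.
  by apply: contra ax => wx; apply: mem_trans wx.
apply: hubA => //; apply/negP => wc.
have gc : g \in <[b * a]> by rewrite -cab; apply: mem_trans wc.
have gb : g \in <[b]>.
  apply: (lemL (commute_sym cab) apow) => //.
  by rewrite prime_coprime // dvdn_prime2 // eq_sym.
by move: bx; rewrite (mem_trans (prime_swap gb g1 _) gx) // ob.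
Qed.

Lemma caseD x h : x \in G -> a \in <[x]> -> b \in <[x]> -> h \in G -> h \notin <[x]> ->
  coprime #[h] p -> exists w, D_adj G x w /\ D_adj G w (a * b).
Proof.
move=> xG ax bx hG hx cop.
have h1 : h != 1 by apply: contraNneq hx => ->; rewrite group1.
have cha := cA hG.
have ah : a \notin <[h]>.
  apply/negP => ah; have : p %| #[h] by rewrite -oa orderE order_dvdG.
  by move: cop; rewrite coprime_sym prime_coprime // => /negP.
have hc : h \notin <[a * b]>.
  apply/negP => hc; move: hx; rewrite cab in hc.
  have hb : h \in <[b]> by apply: (lemL (commute_sym cab) apow); rewrite // coprime_sym.
  by rewrite (mem_trans hb bx).
case: (boolP (b \in <[h]>)) => bh.
  exists h; split; last exact: hubB.
  apply: (D_adjI xG hG bx bh b1 _ hx).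
  by apply: contra ah => xh; apply: mem_trans ax xh.
have cop' : coprime #[h] #[a] by rewrite oa.
have hw : h \in <[h * a]> by rewrite -cycle_subG cycleMsub.
have aw : a \in <[h * a]> by rewrite cha -cycle_subG cycleMsub // coprime_sym.
have wG : h * a \in G by rewrite groupM.
have bw : b \notin <[h * a]>.
  by apply: contra bh => bw; apply: (lemL cha apow) => //; rewrite ob.
exists (h * a); split.
  apply: (D_adjI xG wG ax aw a1).
    by apply: contra bw => xw; apply: mem_trans bx xw.
  by apply: contra hx => wx; apply: mem_trans hw wx.
apply: hubA => //; apply: contra hc => wc; apply: mem_trans hw wc.
Qed.

End Hub.
Unset Implicit Arguments.

Theorem theorem4p1 (gT : finGroupType) (G : {group gT}) :
  2 <= size (primes #|'Z(G)|) ->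
  (D_connected G <->
     ~ (exists p q : nat, [/\ prime p, prime q & G \isog Zp (p * q)]))
  /\ (D_connected G -> D_diam_le G 6).
Proof.
move=> hZ.
set s := primes #|'Z(G)|.
have ps : nth 0%N s 0 \in s by apply: mem_nth; apply: leq_trans hZ.
have qs : nth 0%N s 1 \in s by apply: mem_nth.
have npq : nth 0%N s 0 != nth 0%N s 1.
  by rewrite nth_uniq ?primes_uniq //; apply: leq_trans hZ.
move: ps qs npq; set p := nth 0%N s 0; set q := nth 0%N s 1.
rewrite !mem_primes => /and3P[pp _ pZ] /and3P[pq _ qZ] npq.
have [a aZ oa] := Cauchy pp pZ.
have [b bZ ob] := Cauchy pq qZ.
have aG : a \in G by apply: (subsetP (center_sub G)).
have bG : b \in G by apply: (subsetP (center_sub G)).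
have cA : forall g, g \in G -> commute g a.
  by move=> g gG; case/centerP: aZ => _ /(_ g gG) /commute_sym.
have cB : forall g, g \in G -> commute g b.
  by move=> g gG; case/centerP: bZ => _ /(_ g gG) /commute_sym.
have cab : commute a b := commute_sym (cA b bG).
have qp : q != p by rewrite eq_sym.
have full : forall x y, x \in G -> a \in <[x]> -> b \in <[x]> -> y \in G -> y \notin <[x]> ->
    exists w, D_adj G x w /\ D_adj G w (a * b).
  move=> x y xG ax bx yG yx.
  have yy : <[y]> \subset G by rewrite cycle_subG.
  have h1G : y.`_p \in G by apply: (subsetP yy); apply: cycle_constt.
  have h2G : y.`_p^' \in G by apply: (subsetP yy); apply: cycle_constt.
  have := consttC p y => Ey.
  case: (boolP (y.`_p^' \in <[x]>)) => h2x; last first.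
    apply: (@caseD _ G p q a b _ _ _ _ _ _ _ _ x (y.`_p^')) => //.
    apply: pnat_coprime (p_elt_constt _ _) _.
    by rewrite pnatNK pnat_id.
  case: (boolP (y.`_p \in <[x]>)) => h1x.
    by move: yx; rewrite -Ey groupM.
  have [w H] : exists w, D_adj G x w /\ D_adj G w (b * a).
    apply: (@caseD _ G q p b a _ _ _ _ _ _ _ _ x (y.`_p)) => //.
    by apply: (pnat_coprime (p_elt_constt _ _)); rewrite pnatE.
  by exists w; rewrite cab.
set c := a * b.
have cG : c \in G by rewrite groupM.
have near : forall x, x \in D_vert G -> D_adj G x c \/ exists w, D_adj G x w /\ D_adj G w c.
  move=> x; rewrite inE => /andP[xG /existsP[y xy]].
  have [_ yG _ yx _] := D_adjE xy.
  have [n1 np] := D_adj_ord xy.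
  case: (boolP (a \in <[x]>)) => ax; case: (boolP (b \in <[x]>)) => bx.
  - by right; apply: (full x y).
  - by left; apply: (@caseA _ G p q a b _ _ _ _ _ _ _ _ x y).
  - left; rewrite /c cab; apply: (@caseA _ G q p b a _ _ _ _ _ _ _ _ x y) => //.
  have x1 : (1 < #[x])%N by rewrite ltn_neqAle eq_sym n1 orderE cardG_gt0.
  have pr := pdiv_prime x1.
  have [g gx og] := Cauchy pr (pdiv_dvd #[x]).
  right; case: (eqVneq (pdiv #[x]) p) => rp.
    exists (g * b); rewrite /c cab.
    apply: (@caseC _ G q p b a _ _ _ _ _ _ _ _ x y g) => //; rewrite og ?pr //.
    by rewrite rp.
  exists (g * a).
  by apply: (@caseC _ G p q a b _ _ _ _ _ _ _ _ x y g) => //; rewrite og.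
have toC : forall x, x \in D_vert G -> exists s1 : seq gT,
    [/\ size s1 <= 2, path (D_adj G) x s1 & last x s1 = c].
  move=> x /near[xc|[w [xw wc]]]; first by exists [:: c]; rewrite /= xc.
  by exists [:: w; c]; rewrite /= xw wc.
have fromC : forall y, y \in D_vert G -> exists s2 : seq gT,
    [/\ size s2 <= 2, path (D_adj G) c s2 & last c s2 = y].
  move=> y /near[yc|[w [yw wc]]].
    by exists [:: y]; rewrite /= (D_adjC yc).
  by exists [:: w; y]; rewrite /= (D_adjC yw) (D_adjC wc).
have diam : forall x y, x \in D_vert G -> y \in D_vert G -> exists s : seq gT,
    [/\ size s <= 4, path (D_adj G) x s & last x s = y].
  move=> x y /toC[s1 [l1 p1 e1]] /fromC[s2 [l2 p2 e2]].
  exists (s1 ++ s2); rewrite size_cat cat_path last_cat e1 p1 p2 e2; split => //.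
  by rewrite -[4]/(2 + 2)%N leq_add.
have noiso : D_connected G -> ~ (exists p q : nat, [/\ prime p, prime q & G \isog Zp (p * q)]).
  case/andP => /set0Pn[x] + _ [p' [q' [pp' pq' iso]]].
  rewrite inE => /andP[xG /existsP[y xy]].
  have [_ yG _ yx _] := D_adjE xy.
  have [n1 np] := D_adj_ord xy.
  have cardG : #|G| = (p' * q')%N.
    by rewrite (card_isog iso) card_Zp // muln_gt0 !prime_gt0.
  have d : #[x] %| p' * q' by rewrite -cardG order_dvdG.
  have E := arith2 pp' pq' d n1 np.
  have xsub : <[x]> \subset G by rewrite cycle_subG.
  have : <[x]> == G :> {set gT} by rewrite eqEcard xsub -orderE E cardG leqnn.
  idtac.
  by move/eqP=> EG; move: yx; rewrite EG yG.
split; last first.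
  move=> _ x y xV yV; have [s0 [l0 p0 e0]] := diam x y xV yV.
  by exists s0; split => //; apply: leq_trans l0 _.
split; first exact: noiso.
move=> niso.
have [y yG yc] : exists2 y, y \in G & y \notin <[c]>.
  apply/subsetPn; apply/negP => Gc; apply: niso; exists p, q; split => //.
  have EG : <[c]> = G :> {set gT}.
    by apply/eqP; rewrite eqEcard cycle_subG cG subset_leq_card.
  have oc : #[c] = (p * q)%N.
    by rewrite orderM ?oa ?ob // prime_coprime // dvdn_prime2.
  rewrite -oc isog_sym.
  have EGg : <[c]>%G = G by apply: val_inj.
  by rewrite -EGg Zp_isog.
have ac : a \in <[c]>.
  by rewrite -cycle_subG cycleMsub // oa ob prime_coprime // dvdn_prime2.
have bc : b \in <[c]>.
  rewrite /c cab -cycle_subG cycleMsub // oa ob prime_coprime // dvdn_prime2 //.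
have [w [cw _]] := full c y cG ac bc yG yc.
have cV : c \in D_vert G by rewrite inE cG; apply/existsP; exists w.
apply/andP; split; first by apply/set0Pn; exists c.
apply/forall_inP => x xV; apply/forall_inP => z zV.
have [s0 [_ p0 e0]] := diam x z xV zV.
by apply/connectP; exists s0.
Qed.
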